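(* In the complex single-interference setting of the context, assume additionally $\tau\in(0,\pi/2)$, $c_1\neq0$, and $\delta_1:=\sigma_n^2\tan\tau-|c_1|\cos\tau\cos(\phi_c+\phi_z)\neq0$. Then $\mathrm{MSE}_{\rm RZF}=\mathrm{MSE}_{\rm MMSE\text{-}DR}$ if and only if $\cos(\phi_c+\phi_z)=-1$.
   Context: Complex single-interference model: $y(k)=s_0(k)h_0+s_1(k)h_1+n(k)\in\mathbb{C}^N$ ($N\ge2$), with $\|h_0\|=\|h_1\|=1$, $h_0^{\sf H}h_1=\sin\tau\,e^{i\phi_z}$, $\tau\in[0,\pi/2)$, $\phi_z\in[0,2\pi)$; zero-mean jointly weakly stationary complex signals $s_0,s_1$ with $\sigma_j^2:=E|s_j(k)|^2>0$, $c_1:=E[s_0^*(k)s_1(k)]=|c_1|e^{i\phi_c}$, $\phi_c\in[0,2\pi)$; noise $n(k)\sim\mathcal{CN}(0,\sigma_n^2I)$, $\sigma_n^2>0$, uncorrelated with the signals. $R:=E[y(k)y(k)^{\sf H}]$. The MSE of $w$ is $J_{\rm MSE}(w):=E|w^{\sf H}y(k)-s_0(k)|^2$. RZF beamformer $w_{\rm RZF}(\lambda):=R_\lambda^{-1}h_0/(h_0^{\sf H}R_\lambda^{-1}h_0)$ with $R_\lambda:=R+\lambda h_1h_1^{\sf H}$, $\lambda\ge0$, and $\mathrm{MSE}_{\rm RZF}:=\inf_{\lambda\ge0}J_{\rm MSE}(w_{\rm RZF}(\lambda))$. MMSE-DR beamformer $w_{\rm MMSE\text{-}DR}:=\widetilde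 R^{-1}h_0/(h_0^{\sf H}\widetilde R^{-1}h_0)$ with $\widetilde R:=\sigma_n^2I+\sigma_1^2h_1h_1^{\sf H}$, and $\mathrm{MSE}_{\rm MMSE\text{-}DR}:=J_{\rm MSE}(w_{\rm MMSE\text{-}DR})$. *)

(* Defs.v *)
From HB Require Import structures.
From mathcomp Require Import all_boot all_order all_algebra.
From mathcomp Require Import all_classical all_reals.
From mathcomp Require Import trigo.
From mathcomp Require Import complex.
Set Implicit Arguments. Unset Strict Implicit. Unset Printing Implicit Defensive.
Import Order.TTheory GRing.Theory Num.Theory.
Local Open Scope ring_scope.
Local Open Scope classical_set_scope.

Section Model.
Variable R : realType.
Local Notation C := (R[i]).

Definition expi (t : R) : C := Complex (cos t) (sin t).
Definition rc (x : R) : C := Complex x 0.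
Definition adjv (N : nat) (v : 'cV[C]_N) : 'rV[C]_N := (map_mx (@conjc R) v)^T.
Definition dotH (N : nat) (u v : 'cV[C]_N) : C := (adjv u *m v) 0 0.

Variables (N : nat) (h0 h1 : 'cV[C]_N) (s0 s1 sn : R) (c1 : C).
(* s0 = sigma_0^2, s1 = sigma_1^2, sn = sigma_n^2, c1 = E[s0^* s1] *)

(* R = E[y y^H] for y = s0 h0 + s1 h1 + n *)
Definition covR : 'M[C]_N :=
  rc s0 *: (h0 *m adjv h0) + rc s1 *: (h1 *m adjv h1)
  + conjc c1 *: (h0 *m adjv h1) + c1 *: (h1 *m adjv h0) + rc sn *: 1%:M.

(* p = E[y s0^*] *)
Definition crossp : 'cV[C]_N := rc s0 *: h0 + c1 *: h1.

(* J_MSE(w) = E|w^H y - s0|^2 = w^H R w - w^H p - p^H w + sigma_0^2 *)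
Definition J_MSE (w : 'cV[C]_N) : R :=
  complex.Re (dotH w (covR *m w) - dotH w crossp - dotH crossp w) + s0.

Definition Rlam (lam : R) : 'M[C]_N := covR + rc lam *: (h1 *m adjv h1).

Definition w_RZF (lam : R) : 'cV[C]_N :=
  (dotH h0 (invmx (Rlam lam) *m h0))^-1 *: (invmx (Rlam lam) *m h0).

Definition MSE_RZF : R :=
  inf [set x | exists2 lam : R, 0 <= lam & x = J_MSE (w_RZF lam)].

Definition Rtilde : 'M[C]_N := rc sn *: 1%:M + rc s1 *: (h1 *m adjv h1).

Definition w_MMSE_DR : 'cV[C]_N :=
  (dotH h0 (invmx Rtilde *m h0))^-1 *: (invmx Rtilde *m h0).

Definition MSE_MMSE_DR : R := J_MSE w_MMSE_DR.

End Model.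

(* Main.v *)
Require Import Defs.
From HB Require Import structures.
From mathcomp Require Import all_boot all_order all_algebra.
From mathcomp Require Import all_classical all_reals.
From mathcomp Require Import trigo.
From mathcomp Require Import complex.
From mathcomp Require Import ring lra.
Import Order.TTheory GRing.Theory Num.Theory.
Local Open Scope ring_scope.

Section S.
Variable R : realType.
Local Notation C := (R[i]).
Variable N : nat.
Implicit Types u v w a b : 'cV[C]_N.

Lemma dotH_sum u v : dotH u v = \sum_i conjc (u i 0) * v i 0.
Proof. rewrite /dotH /adjv !mxE; apply: eq_bigr => i _; rewrite !mxE. done. Qed.

Lemma dotHDr u v w : dotH u (v + w) = dotH u v + dotH u w.
Proof. rewrite !dotH_sum -big_split /=; apply: eq_bigr => i _; rewrite !mxE; ring. Qed.
Lemma dotHDl u v w : dotH (u + v) w = dotH u w + dotH v w.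
Proof. rewrite !dotH_sum -big_split /=; apply: eq_bigr => i _; rewrite !mxE rmorphD /=; ring. Qed.
Lemma dotHZr u v k : dotH u (k *: v) = k * dotH u v.
Proof. rewrite !dotH_sum mulr_sumr; apply: eq_bigr => i _; rewrite !mxE; ring. Qed.
Lemma dotHZl u v k : dotH (k *: u) v = conjc k * dotH u v.
Proof. rewrite !dotH_sum mulr_sumr; apply: eq_bigr => i _; rewrite !mxE rmorphM /=; ring. Qed.
Lemma dotHC u v : dotH u v = conjc (dotH v u).
Proof. rewrite !dotH_sum rmorph_sum; apply: eq_bigr => i _; rewrite rmorphM /= conjcK; ring. Qed.
Lemma dotHNr u v : dotH u (- v) = - dotH u v.
Proof. by rewrite -scaleN1r dotHZr mulN1r. Qed.
Lemma dotHNl u v : dotH (- u) v = - dotH u v.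
Proof. by rewrite -scaleN1r dotHZl rmorphN1 mulN1r. Qed.
Lemma dotHBr u v w : dotH u (v - w) = dotH u v - dotH u w.
Proof. by rewrite dotHDr dotHNr. Qed.
Lemma dotHBl u v w : dotH (u - v) w = dotH u w - dotH v w.
Proof. by rewrite dotHDl dotHNl. Qed.
Lemma outer_mul a b v : (a *m adjv b) *m v = dotH b v *: a.
Proof.
apply/matrixP => i j; rewrite -mulmxA !mxE big_ord1 (ord1 j) /dotH; ring.
Qed.

Lemma cReD (x y : C) : complex.Re (x + y) = complex.Re x + complex.Re y.
Proof. by case: x; case: y. Qed.
Lemma cReN (x : C) : complex.Re (- x) = - complex.Re x.
Proof. by case: x. Qed.
Lemma cReB (x y : C) : complex.Re (x - y) = complex.Re x - complex.Re y.
Proof. by rewrite cReD cReN. Qed.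
Lemma cReM (x y : C) : complex.Re (x * y) = complex.Re x * complex.Re y - complex.Im x * complex.Im y.
Proof. by case: x; case: y. Qed.
Lemma cImM (x y : C) : complex.Im (x * y) = complex.Re x * complex.Im y + complex.Im x * complex.Re y.
Proof. by case: x => a b; case: y => c d /=. Qed.
Lemma Re_rc (x : R) : complex.Re (rc x) = x. Proof. by []. Qed.
Lemma Im_rc (x : R) : complex.Im (rc x) = 0. Proof. by []. Qed.
Lemma conj_rc (x : R) : conjc (rc x) = rc x. Proof. by rewrite /rc /= oppr0. Qed.
Lemma cRe_conj (x : C) : complex.Re (conjc x) = complex.Re x. Proof. by case: x. Qed.
Lemma cIm_conj (x : C) : complex.Im (conjc x) = - complex.Im x. Proof. by case: x. Qed.

Lemma Re_normsq (x : C) : complex.Re (conjc x * x) = complex.Re x ^+ 2 + complex.Im x ^+ 2.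
Proof. rewrite cReM cRe_conj cIm_conj; ring. Qed.
Lemma Re_normsq' (x : C) : complex.Re (x * conjc x) = complex.Re x ^+ 2 + complex.Im x ^+ 2.
Proof. by rewrite mulrC Re_normsq. Qed.

Lemma cRe_sum (I : finType) (F : I -> C) : complex.Re (\sum_i F i) = \sum_i complex.Re (F i).
Proof. by apply: (big_morph _ cReD). Qed.

Lemma dotH_ge0 u : 0 <= complex.Re (dotH u u).
Proof. rewrite dotH_sum cRe_sum; apply: sumr_ge0 => i _; rewrite Re_normsq; nra. Qed.

Lemma dotH_eq0 u : complex.Re (dotH u u) = 0 -> u = 0.
Proof.
rewrite dotH_sum cRe_sum => /eqP; rewrite psumr_eq0; last first.
  by move=> i _; rewrite Re_normsq; nra.
move=> /allP H; apply/matrixP => i j; rewrite (ord1 j) !mxE.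
have := H i (mem_index_enum i); rewrite Re_normsq => /eqP H2.
case: (u i 0) H2 => a b /= H2; apply/eqP; rewrite eq_complex /=; apply/andP; split; apply/eqP; nra.
Qed.
End S.
Arguments dotHC {R N} u v.
Arguments dotH_eq0 {R N} u.
Arguments dotH_ge0 {R N} u.
Section CJ.
Variable R : realType.
Lemma cjD (x y : R[i]) : conjc (x + y) = conjc x + conjc y. Proof. exact: rmorphD. Qed.
Lemma cjB (x y : R[i]) : conjc (x - y) = conjc x - conjc y. Proof. exact: rmorphB. Qed.
Lemma cjN (x : R[i]) : conjc (- x) = - conjc x. Proof. exact: rmorphN. Qed.
Lemma cjM (x y : R[i]) : conjc (x * y) = conjc x * conjc y. Proof. exact: rmorphM. Qed.
Lemma cjV (x : R[i]) : conjc (x^-1) = (conjc x)^-1. Proof. exact: conjc_inv. Qed.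
Lemma cj1 : conjc (1 : R[i]) = 1. Proof. exact: conjc1. Qed.
Lemma cj0 : conjc (0 : R[i]) = 0. Proof. exact: conjc0. Qed.
End CJ.
Section ReI.
Variable R : realType.
Lemma cImD (x y : R[i]) : complex.Im (x + y) = complex.Im x + complex.Im y.
Proof. by case: x; case: y. Qed.
Lemma cImN (x : R[i]) : complex.Im (- x) = - complex.Im x.
Proof. by case: x. Qed.
Lemma cImB (x y : R[i]) : complex.Im (x - y) = complex.Im x - complex.Im y.
Proof. by rewrite cImD cImN. Qed.
Lemma lin_eq (T : zmodType) (a b c d : T) : a = b -> c - d = a - b -> c = d.
Proof. by move=> -> /eqP; rewrite subrr subr_eq0 => /eqP. Qed.
End ReI.
Lemma Re_rcM (R : realType) (a : R) (z : R[i]) : complex.Re (rc a * z) = a * complex.Re z.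
Proof. by case: z => x y /=; rewrite mul0r subr0. Qed.
Lemma Im_rcM (R : realType) (a : R) (z : R[i]) : complex.Im (rc a * z) = a * complex.Im z.
Proof. by case: z => x y /=; rewrite mul0r addr0. Qed.
Lemma lin_eq2 (T : zmodType) (a b c d e : T) : a = b -> e = 0 -> c - d = a - b - e -> c = d.
Proof. by move=> -> ->; rewrite subrr subr0 => /eqP; rewrite subr_eq0 => /eqP. Qed.
Lemma real_bound (R : realType) (E c2 k A lam psi Dr Di Zr Zi : R) :
  0 < E -> 0 < c2 -> 0 < k -> 0 < A -> 0 <= lam -> -1 < psi -> psi <= 1 ->
  (E + lam * c2) * E * Dr = - c2 * Zr -> (E + lam * c2) * E * Di = - c2 * Zi ->
  Zr ^+ 2 + Zi ^+ 2 = (E * k) ^+ 2 + (lam * A) ^+ 2 + 2 * (E * k) * (lam * A) * psi ->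
  c2 ^+ 2 * ((1 + psi) / 2) * Num.min (k ^+ 2 / 2) (A ^+ 2 / (2 * c2 ^+ 2)) / E ^+ 2
    <= Dr ^+ 2 + Di ^+ 2.
Proof.
move=> E0 c0 k0 A0 l0 p1 p2 hr hi hZ.
set t := (1 + psi) / 2; set m := Num.min _ _.
set u := E * k in hZ; set v := lam * A in hZ.
have u0 : 0 <= u by rewrite mulr_ge0 // ltW.
have v0 : 0 <= v by rewrite mulr_ge0 // ltW.
have t0 : 0 < t by rewrite /t divr_gt0 //; lra.
have h1 : t * (u ^+ 2 + v ^+ 2) <= Zr ^+ 2 + Zi ^+ 2.
  rewrite hZ -subr_ge0.
  have -> : u ^+ 2 + v ^+ 2 + 2 * u * v * psi - t * (u ^+ 2 + v ^+ 2)
     = ((1 - psi) / 2) * (u - v) ^+ 2 + u * v * (1 + psi) by rewrite /t; field.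
  apply: addr_ge0; first by rewrite mulr_ge0 ?sqr_ge0 // divr_ge0 //; lra.
  by rewrite !mulr_ge0 //; lra.
have m0 : 0 < m by rewrite /m lt_min !divr_gt0 ?exprn_gt0 ?mulr_gt0 //.
have mk : m <= k ^+ 2 / 2 by rewrite /m ge_min lexx.
have mA : m <= A ^+ 2 / (2 * c2 ^+ 2) by rewrite /m ge_min lexx orbT.
set D := E + lam * c2 in hr hi.
have D0 : 0 < D by rewrite /D ltr_wpDr // mulr_ge0 // ltW.
have h2 : m * D ^+ 2 <= u ^+ 2 + v ^+ 2.
  have a1 : D ^+ 2 <= 2 * E ^+ 2 + 2 * lam ^+ 2 * c2 ^+ 2.
    rewrite /D -subr_ge0.
    have -> : 2 * E ^+ 2 + 2 * lam ^+ 2 * c2 ^+ 2 - (E + lam * c2) ^+ 2 = (E - lam * c2) ^+ 2 by ring.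
    exact: sqr_ge0.
  have a2 : m * (2 * E ^+ 2) <= u ^+ 2.
    have := ler_wpM2r (ltW (mulr_gt0 (ltr0n _ 2) (exprn_gt0 2 E0))) mk.
    move=> H; apply: (le_trans H); rewrite /u.
    have -> : k ^+ 2 / 2 * (2 * E ^+ 2) = (E * k) ^+ 2 by field.
    by [].
  have a3 : m * (2 * lam ^+ 2 * c2 ^+ 2) <= v ^+ 2.
    have h2c : 0 <= 2 * lam ^+ 2 * c2 ^+ 2 by apply: mulr_ge0; [apply: mulr_ge0 => //; exact: sqr_ge0 | exact: sqr_ge0].
    have := ler_wpM2r h2c mA.
    move=> H; apply: (le_trans H); rewrite /v.
    have -> : A ^+ 2 / (2 * c2 ^+ 2) * (2 * lam ^+ 2 * c2 ^+ 2) = (lam * A) ^+ 2.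
      by field; rewrite gt_eqF.
    by [].
  apply: (le_trans (ler_wpM2l (ltW m0) a1)); rewrite mulrDr; exact: lerD.
have h3 : c2 ^+ 2 * (t * (m * D ^+ 2)) <= (D * E) ^+ 2 * (Dr ^+ 2 + Di ^+ 2).
  have -> : (D * E) ^+ 2 * (Dr ^+ 2 + Di ^+ 2) = c2 ^+ 2 * (Zr ^+ 2 + Zi ^+ 2).
    have -> : (D * E) ^+ 2 * (Dr ^+ 2 + Di ^+ 2) = (D * E * Dr) ^+ 2 + (D * E * Di) ^+ 2 by ring.
    rewrite hr hi; ring.
  apply: ler_wpM2l; first exact: sqr_ge0.
  exact: le_trans (ler_wpM2l (ltW t0) h2) h1.
rewrite ler_pdivrMr ?exprn_gt0 //.
rewrite -(ler_pM2r (exprn_gt0 2 D0)).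
have -> : c2 ^+ 2 * t * m * D ^+ 2 = c2 ^+ 2 * (t * (m * D ^+ 2)) by ring.
have -> : (Dr ^+ 2 + Di ^+ 2) * E ^+ 2 * D ^+ 2 = (D * E) ^+ 2 * (Dr ^+ 2 + Di ^+ 2) by ring.
exact: h3.
Qed.
Lemma rcD (R : realType) (a b : R) : rc (a + b) = rc a + rc b.
Proof. by rewrite /rc /GRing.add /= addr0. Qed.
Lemma rcM (R : realType) (a b : R) : rc (a * b) = rc a * rc b.
Proof. by rewrite /rc /GRing.mul /= !mul0r mulr0 subr0 addr0. Qed.

Section M.
Variable R : realType.
Local Notation C := (R[i]).
Variable N : nat.
Variables (h0 h1 : 'cV[C]_N) (s0 s1 sn : R) (c1 : C).
Implicit Types u v w x y : 'cV[C]_N.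

Lemma covR_mul u : covR h0 h1 s0 s1 sn c1 *m u =
  (rc s0 * dotH h0 u + conjc c1 * dotH h1 u) *: h0
  + (rc s1 * dotH h1 u + c1 * dotH h0 u) *: h1 + rc sn *: u.
Proof.
rewrite /covR !mulmxDl -!scalemxAl !outer_mul mul1mx.
apply/matrixP => i j; rewrite !mxE; ring.
Qed.

Lemma Rlam_mul lam u : Rlam h0 h1 s0 s1 sn c1 lam *m u =
  (rc s0 * dotH h0 u + conjc c1 * dotH h1 u) *: h0
  + (rc s1 * dotH h1 u + c1 * dotH h0 u + rc lam * dotH h1 u) *: h1 + rc sn *: u.
Proof.
rewrite /Rlam mulmxDl covR_mul -scalemxAl outer_mul.
apply/matrixP => i j; rewrite !mxE; ring.
Qed.

Lemma Rt_mul u : Rtilde h1 s1 sn *m u = (rc s1 * dotH h1 u) *: h1 + rc sn *: u.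
Proof.
rewrite /Rtilde mulmxDl -!scalemxAl outer_mul mul1mx.
apply/matrixP => i j; rewrite !mxE; ring.
Qed.

Hypothesis h00 : dotH h0 h0 = 1.
Hypothesis h11 : dotH h1 h1 = 1.

Lemma dotHh10 : dotH h1 h0 = conjc (dotH h0 h1).
Proof. exact: dotHC. Qed.

Ltac cj := rewrite ?cjD ?cjM ?cjN ?cjB ?cjV ?conjcK ?conj_rc ?cj1 ?cj0.

Lemma Rlam_herm lam x y : dotH (Rlam h0 h1 s0 s1 sn c1 lam *m x) y = dotH x (Rlam h0 h1 s0 s1 sn c1 lam *m y).
Proof.
rewrite !Rlam_mul !dotHDl !dotHDr !dotHZl !dotHZr.
rewrite (dotHC x h0) (dotHC x h1).
cj; ring.
Qed.

Lemma Rt_herm x y : dotH (Rtilde h1 s1 sn *m x) y = dotH x (Rtilde h1 s1 sn *m y).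
Proof.
rewrite !Rt_mul !dotHDl !dotHDr !dotHZl !dotHZr.
rewrite (dotHC x h1).
cj; ring.
Qed.
End M.

Section G.
Variable R : realType.
Local Notation C := (R[i]).
Variable N : nat.
Variables (h0 : 'cV[C]_N) (sn : R) (M : 'M[C]_N).
Hypothesis h00 : dotH h0 h0 = 1.
Hypothesis sn_gt0 : 0 < sn.
Hypothesis herm : forall x y, dotH (M *m x) y = dotH x (M *m y).
Hypothesis coer : forall x, sn * complex.Re (dotH x x) <= complex.Re (dotH x (M *m x)).

Lemma inj0 (x : 'cV[C]_N) : M *m x = 0 -> x = 0.
Proof.
move=> H; have := coer x; rewrite H.
have -> : dotH x 0 = 0 by rewrite /dotH mulmx0 mxE.
move=> H2; apply: dotH_eq0; have := dotH_ge0 x; have R0 : complex.Re (0:C) = 0 by []; rewrite R0 pmulr_rle0 // in H2; move=> H3; apply/eqP; by rewrite eq_le H2 H3.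
Qed.

Lemma M_unit : M \in unitmx.
Proof.
rewrite unitmxE unitfE -det_tr; apply/negP => /det0P [v vn0 hv].
have : M *m v^T = 0 by rewrite -[M]trmxK -trmx_mul hv trmx0.
move/inj0 => /(congr1 trmx); rewrite trmxK trmx0 => E.
by move: vn0; rewrite E eqxx.
Qed.

Definition bf := (dotH h0 (invmx M *m h0))^-1 *: (invmx M *m h0).

Lemma bf_prop : dotH h0 bf = 1 /\ dotH bf h0 = 1 /\ exists b, M *m bf = b *: h0.
Proof.
set u := invmx M *m h0.
have Mu : M *m u = h0 by rewrite /u mulmxA mulmxV ?M_unit // mul1mx.
set d := dotH h0 u.
have d1 : d = dotH u (M *m u) by rewrite -herm Mu.
have d2 : dotH u h0 = d by rewrite d1 Mu.
have dr : conjc d = d by rewrite -{1}d2 -dotHC.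
have h0n : h0 != 0.
  apply/eqP => E; move: h00; rewrite E /dotH mulmx0 mxE => /eqP; rewrite eq_sym oner_eq0.
  by [].
have un : u != 0 by apply/eqP => E; move: Mu; rewrite E mulmx0 => E2; move: h0n; rewrite -E2 eqxx.
have dn : d != 0.
  apply/eqP => E; have := coer u; rewrite -d1 E.
  have R0 : complex.Re (0:C) = 0 by [].
  rewrite R0 pmulr_rle0 // => H2; have := dotH_ge0 u => H1.
  have : complex.Re (dotH u u) = 0 by apply/eqP; rewrite eq_le H1 H2.
  by move/dotH_eq0 => E2; move: un; rewrite E2 eqxx.
have e1 : dotH h0 bf = 1 by rewrite /bf dotHZr -/u -/d mulVf.
split => //; split.
  by rewrite dotHC e1 cj1.
exists d^-1; by rewrite /bf -scalemxAr Mu.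
Qed.
End G.

Ltac cj := rewrite ?cjD ?cjM ?cjN ?cjB ?cjV ?conjcK ?cj1 ?cj0 ?conj_rc.
Ltac reim := rewrite ?cReD ?cReN ?cReB ?cReM ?cImD ?cImN ?cImB ?cImM ?cRe_conj ?cIm_conj ?Re_rc ?Im_rc.

Section Main.
Local Open Scope classical_set_scope.
Variable R : realType.
Local Notation C := (R[i]).
Variable N : nat.
Variables (h0 h1 : 'cV[C]_N) (s0 s1 sn : R) (c1 : C).
Hypothesis h00 : dotH h0 h0 = 1.
Hypothesis h11 : dotH h1 h1 = 1.
Hypothesis s0_gt0 : 0 < s0.
Hypothesis s1_gt0 : 0 < s1.
Hypothesis sn_gt0 : 0 < sn.
Hypothesis cb : complex.Re c1 ^+ 2 + complex.Im c1 ^+ 2 <= s0 * s1.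
Local Notation Rl lam := (Rlam h0 h1 s0 s1 sn c1 lam).
Local Notation Rt := (Rtilde h1 s1 sn).
Local Notation J := (J_MSE h0 h1 s0 s1 sn c1).
Local Notation rho := (dotH h0 h1).

Lemma Rl_coer lam : 0 <= lam -> forall x : 'cV[C]_N,
  sn * complex.Re (dotH x x) <= complex.Re (dotH x (Rl lam *m x)).
Proof.
move=> hl x; rewrite Rlam_mul !dotHDr !dotHZr (dotHC x h0) (dotHC x h1).
rewrite cReD Re_rcM; reim.
move: cb; case: c1 => a b /=.
case: (dotH h0 x) => p1 p2; case: (dotH h1 x) => q1 q2 /= cb'.
set n := complex.Re (dotH x x); set m := complex.Im (dotH x x).
have key : s0 * (s0 * (p1^+2 + p2^+2) + s1 * (q1^+2+q2^+2) + lam * (q1^+2+q2^+2)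
   + 2 * ((a * p1 - b * p2) * q1 + (a * p2 + b * p1) * q2)) =
   (s0 * p1 + a * q1 + b * q2) ^+ 2 + (s0 * p2 + a * q2 - b * q1) ^+ 2
   + (s0 * s1 - (a^+2 + b^+2)) * (q1^+2 + q2^+2) + s0 * lam * (q1^+2+q2^+2).
  ring.
have : 0 <= s0 * (s0 * (p1^+2 + p2^+2) + s1 * (q1^+2+q2^+2) + lam * (q1^+2+q2^+2)
   + 2 * ((a * p1 - b * p2) * q1 + (a * p2 + b * p1) * q2)).
  rewrite key; have : 0 <= s0 * s1 - (a^+2 + b^+2) by lra.
  move=> H; have q0 : 0 <= q1^+2 + q2^+2 by rewrite addr_ge0 ?sqr_ge0.
  rewrite !addr_ge0 ?sqr_ge0 ?mulr_ge0 // ltW //.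
rewrite pmulr_rge0 // => H.
nra.
Qed.

Lemma Rt_form (x : 'cV[C]_N) : complex.Re (dotH x (Rt *m x)) =
  s1 * (complex.Re (dotH h1 x) ^+ 2 + complex.Im (dotH h1 x) ^+ 2) + sn * complex.Re (dotH x x).
Proof.
rewrite Rt_mul !dotHDr !dotHZr (dotHC x h1) cReD !Re_rcM; reim.
case: (dotH h1 x) => q1 q2 /=; ring.
Qed.

Lemma Rt_coer (x : 'cV[C]_N) : sn * complex.Re (dotH x x) <= complex.Re (dotH x (Rt *m x)).
Proof. by rewrite Rt_form lerDr mulr_ge0 ?addr_ge0 ?sqr_ge0 // ltW. Qed.

Lemma J_dist (w : 'cV[C]_N) : dotH h0 w = 1 -> J w = complex.Re (dotH w (Rt *m w)).
Proof.
move=> hw; rewrite /J_MSE covR_mul Rt_mul /crossp.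
rewrite !dotHDr !dotHDl !dotHZr !dotHZl (dotHC w h0) (dotHC w h1) hw ?h00.
rewrite -[X in _ + X = _]/(complex.Re (rc s0)) -cReD; congr complex.Re.
cj; ring.
Qed.

Lemma RZF_prop lam : 0 <= lam -> dotH h0 (w_RZF h0 h1 s0 s1 sn c1 lam) = 1 /\
  exists b, Rl lam *m w_RZF h0 h1 s0 s1 sn c1 lam = b *: h0.
Proof.
move=> hl; have [H1 [_ H2]] := @bf_prop _ _ h0 sn (Rl lam) h00 sn_gt0 (@Rlam_herm _ _ h0 h1 s0 s1 sn c1 lam) (Rl_coer lam hl).
by split.
Qed.

Lemma DR_prop : dotH h0 (w_MMSE_DR h0 h1 s1 sn) = 1 /\
  exists b, Rt *m w_MMSE_DR h0 h1 s1 sn = b *: h0.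
Proof.
have [H1 [_ H2]] := @bf_prop _ _ h0 sn Rt h00 sn_gt0 (@Rt_herm _ _ h1 s1 sn) Rt_coer.
by split.
Qed.

Lemma alpha_eq lam (w : 'cV[C]_N) b : dotH h0 w = 1 -> Rl lam *m w = b *: h0 ->
  (rc sn + (rc s1 + rc lam) * (1 - rho * conjc rho)) * dotH h1 w
  = rc sn * conjc rho - (1 - rho * conjc rho) * c1.
Proof.
move=> hw hM.
have e1 := congr1 (dotH h0) hM; have e2 := congr1 (dotH h1) hM.
rewrite Rlam_mul !dotHDr !dotHZr h00 hw (dotHC h1 h0) h11 in e1 e2.
rewrite !mulr1 in e1; rewrite -e1 in e2.
apply: (@lin_eq _ _ _ _ _ e2); ring.
Qed.

Lemma alpha0_eq (w : 'cV[C]_N) b : dotH h0 w = 1 -> Rt *m w = b *: h0 ->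
  (rc sn + rc s1 * (1 - rho * conjc rho)) * dotH h1 w = rc sn * conjc rho.
Proof.
move=> hw hM.
have e1 := congr1 (dotH h0) hM; have e2 := congr1 (dotH h1) hM.
rewrite Rt_mul !dotHDr !dotHZr h00 hw (dotHC h1 h0) h11 in e1 e2.
rewrite !mulr1 in e1; rewrite -e1 in e2.
apply: (@lin_eq _ _ _ _ _ e2); ring.
Qed.

Lemma gap (w v : 'cV[C]_N) b : dotH h0 w = 1 -> dotH h0 v = 1 -> Rt *m v = b *: h0 ->
  J w = J v + complex.Re (dotH (w - v) (Rt *m (w - v))).
Proof.
move=> hw hv hM; rewrite !J_dist // -cReD; congr complex.Re.
have x0 : dotH (w - v) h0 = 0 by rewrite dotHBl (dotHC w h0) (dotHC v h0) hw hv subrr.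
have c1' : dotH (w - v) (Rt *m v) = 0 by rewrite hM dotHZr x0 mulr0.
have c2' : dotH v (Rt *m (w - v)) = 0 by rewrite -Rt_herm hM dotHZl dotHC x0 cj0 mulr0.
set x := w - v in x0 c1' c2' *.
have ew : w = v + x by rewrite /x addrC subrK.
clearbody x; rewrite ew mulmxDr !dotHDl !dotHDr c1' c2'; ring.
Qed.

Lemma eq_case lam (w v : 'cV[C]_N) b b0 : dotH h0 w = 1 -> dotH h0 v = 1 ->
  Rl lam *m w = b *: h0 -> Rt *m v = b0 *: h0 -> c1 + rc lam * dotH h1 w = 0 -> J w = J v.
Proof.
move=> hw hv hM hM0 hc.
have Rtw : Rt *m w = (b - rc s0 - conjc c1 * dotH h1 w) *: h0.
  apply/matrixP => i j; have := congr1 (fun M : 'M[C]_(N,1) => M i j) hM.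
  rewrite Rlam_mul Rt_mul hw !mxE => H.
  have hc' : (c1 + rc lam * dotH h1 w) * h1 i j = 0 by rewrite hc mul0r.
  apply: (@lin_eq2 _ _ _ _ _ _ H hc'); ring.
rewrite (gap w v b0 hw hv hM0) mulmxBr Rtw hM0 -scalerBl dotHZr.
rewrite dotHBl (dotHC w h0) (dotHC v h0) hw hv cj1 subrr mulr0.
by rewrite addr0.
Qed.

Lemma gap_ge (w v : 'cV[C]_N) b : dotH h0 w = 1 -> dotH h0 v = 1 -> Rt *m v = b *: h0 ->
  J v + s1 * (complex.Re (dotH h1 w - dotH h1 v) ^+ 2 + complex.Im (dotH h1 w - dotH h1 v) ^+ 2) <= J w.
Proof.
move=> hw hv hM; rewrite (gap w v b hw hv hM) lerD2l Rt_form dotHBr lerDl.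
by rewrite mulr_ge0 ?dotH_ge0 // ltW.
Qed.

End Main.


Section Fin.
Local Open Scope classical_set_scope.
Variable R : realType.
Local Notation C := (R[i]).
Variable N : nat.
Variables (h0 h1 : 'cV[C]_N) (s0 s1 sn : R) (c1 : C).
Hypothesis h00 : dotH h0 h0 = 1.
Hypothesis h11 : dotH h1 h1 = 1.
Hypothesis s0_gt0 : 0 < s0.
Hypothesis s1_gt0 : 0 < s1.
Hypothesis sn_gt0 : 0 < sn.
Hypothesis cb : complex.Re c1 ^+ 2 + complex.Im c1 ^+ 2 <= s0 * s1.
Local Notation Rl lam := (Rlam h0 h1 s0 s1 sn c1 lam).
Local Notation Rt := (Rtilde h1 s1 sn).
Local Notation J := (J_MSE h0 h1 s0 s1 sn c1).
Local Notation rho := (dotH h0 h1).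


Lemma DR_prop' : dotH h0 (w_MMSE_DR h0 h1 s1 sn) = 1 /\
  exists b, Rt *m w_MMSE_DR h0 h1 s1 sn = b *: h0.
Proof. by apply: DR_prop. Qed.
Lemma RZF_prop' lam : 0 <= lam -> dotH h0 (w_RZF h0 h1 s0 s1 sn c1 lam) = 1 /\
  exists b, Rl lam *m w_RZF h0 h1 s0 s1 sn c1 lam = b *: h0.
Proof. by move=> hl; apply: RZF_prop. Qed.
Lemma alpha_eq' lam (w : 'cV[C]_N) b : dotH h0 w = 1 -> Rl lam *m w = b *: h0 ->
  (rc sn + (rc s1 + rc lam) * (1 - rho * conjc rho)) * dotH h1 w
  = rc sn * conjc rho - (1 - rho * conjc rho) * c1.
Proof. by intros; eapply alpha_eq; eauto. Qed.
Lemma alpha0_eq' (w : 'cV[C]_N) b : dotH h0 w = 1 -> Rt *m w = b *: h0 ->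
  (rc sn + rc s1 * (1 - rho * conjc rho)) * dotH h1 w = rc sn * conjc rho.
Proof. by intros; eapply alpha0_eq; eauto. Qed.
Lemma eq_case' lam (w v : 'cV[C]_N) b b0 : dotH h0 w = 1 -> dotH h0 v = 1 ->
  Rl lam *m w = b *: h0 -> Rt *m v = b0 *: h0 -> c1 + rc lam * dotH h1 w = 0 -> J w = J v.
Proof. move=> hw hv hM hM0 hc; exact: (@eq_case R N h0 h1 s0 s1 sn c1 lam w v b b0 hw hv hM hM0 hc). Qed.
Lemma gap_ge' (w v : 'cV[C]_N) b : dotH h0 w = 1 -> dotH h0 v = 1 -> Rt *m v = b *: h0 ->
  J v + s1 * (complex.Re (dotH h1 w - dotH h1 v) ^+ 2 + complex.Im (dotH h1 w - dotH h1 v) ^+ 2) <= J w.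
Proof. move=> hw hv hM; exact: (@gap_ge R N h0 h1 s0 s1 sn c1 sn_gt0 w v b hw hv hM). Qed.
Variables (tau phiz phic k : R).
Hypothesis rho_re : complex.Re rho = sin tau * cos phiz.
Hypothesis rho_im : complex.Im rho = sin tau * sin phiz.
Hypothesis c1_re : complex.Re c1 = k * cos phic.
Hypothesis c1_im : complex.Im c1 = k * sin phic.
Hypothesis sp : 0 < sin tau.
Hypothesis cp : 0 < cos tau.
Hypothesis kp : 0 < k.

Local Notation S := [set x | exists2 lam : R, 0 <= lam & x = J (w_RZF h0 h1 s0 s1 sn c1 lam)].

Lemma hcc : 1 - rho * conjc rho = rc (cos tau ^+ 2).
Proof.
apply/eqP; rewrite eq_complex; apply/andP; split; apply/eqP; reim.
  rewrite rho_re rho_im /= cos2sin2; transitivity (1 - sin tau ^+ 2 * (cos phiz ^+ 2 + sin phiz ^+ 2)); first ring.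
  by rewrite cos2Dsin2 mulr1.
by rewrite rho_re rho_im /=; ring.
Qed.

Lemma main_sec : inf S = J (w_MMSE_DR h0 h1 s1 sn) <-> cos (phic + phiz) = -1.
Proof.
set wD := w_MMSE_DR h0 h1 s1 sn.
have [hv [b0 hM0]] := DR_prop'.
have a0 := alpha0_eq' wD b0 hv hM0.
set c2 := cos tau ^+ 2.
have c2p : 0 < c2 by rewrite /c2 exprn_gt0.
set E := sn + s1 * c2.
have Ep : 0 < E by rewrite /E addr_gt0 // mulr_gt0.
set A := sn * sin tau.
have Ap : 0 < A by rewrite /A mulr_gt0.
rewrite hcc -rcM -rcD -/E in a0.
have a0r := congr1 (@complex.Re R) a0; have a0i := congr1 (@complex.Im R) a0.
rewrite !Re_rcM cRe_conj rho_re in a0r; rewrite !Im_rcM cIm_conj rho_im in a0i.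
set br := complex.Re (dotH h1 wD) in a0r *; set bi := complex.Im (dotH h1 wD) in a0i *.
have lb : forall lam, 0 <= lam -> J wD <= J (w_RZF h0 h1 s0 s1 sn c1 lam).
  move=> lam hl; have [hw _] := RZF_prop' lam hl.
  apply: le_trans (gap_ge' _ _ _ hw hv hM0); rewrite lerDl mulr_ge0 ?addr_ge0 ?sqr_ge0 //.
  exact: ltW.
have lbS : lbound S (J wD) by move=> x [lam hl ->]; exact: lb.
have neS : nonempty S by exists (J (w_RZF h0 h1 s0 s1 sn c1 0)); exists 0.
have infge : J wD <= inf S by exact: lb_le_inf.
split.
  move=> hinf; have := cos_geN1 (phic + phiz); rewrite le_eqVlt => /orP[/eqP <- //|hpsi].
  exfalso.
  set psi := cos (phic + phiz) in hpsi.
  set K0 := c2 ^+ 2 * ((1 + psi) / 2) * Num.min (k ^+ 2 / 2) (A ^+ 2 / (2 * c2 ^+ 2)) / E ^+ 2.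
  have K0p : 0 < K0.
    have t0 : 0 < (1 + psi) / 2 by rewrite divr_gt0 //; lra.
    have m0 : 0 < Num.min (k ^+ 2 / 2) (A ^+ 2 / (2 * c2 ^+ 2)).
      by rewrite lt_min !divr_gt0 ?exprn_gt0 ?mulr_gt0 //.
    by rewrite /K0 divr_gt0 ?exprn_gt0 // mulr_gt0 // mulr_gt0 // exprn_gt0.
  have lbK : lbound S (J wD + s1 * K0).
    move=> x [lam hl ->].
    have [hw [b hM]] := RZF_prop' lam hl.
    have ae := alpha_eq' lam _ b hw hM.
    rewrite hcc -rcD -rcM -rcD in ae.
    have aer := congr1 (@complex.Re R) ae; have aei := congr1 (@complex.Im R) ae.
    rewrite Re_rcM cReB Re_rcM Re_rcM cRe_conj rho_re c1_re in aer.
    rewrite Im_rcM cImB Im_rcM Im_rcM cIm_conj rho_im c1_im in aei.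
    have hg := gap_ge' (w_RZF h0 h1 s0 s1 sn c1 lam) wD b0 hw hv hM0.
    rewrite cReB cImB in hg; apply: le_trans hg; rewrite lerD2l ler_wpM2l ?(ltW s1_gt0) //.
    move: aer aei; generalize (complex.Re (dotH h1 (w_RZF h0 h1 s0 s1 sn c1 lam))) (complex.Im (dotH h1 (w_RZF h0 h1 s0 s1 sn c1 lam))) => ar ai aer aei.

    apply: (@real_bound R E c2 k A lam psi _ _ (E * k * cos phic + lam * A * cos phiz)
              (E * k * sin phic - lam * A * sin phiz)) => //.
    - by rewrite /psi cos_le1.
    - have -> : (E + lam * c2) * E * (ar - br) = E * ((sn + (s1 + lam) * c2) * ar) - (E + lam * c2) * (E * br).
        by rewrite /E; ring.
      rewrite aer a0r /A /c2; ring.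
    - have -> : (E + lam * c2) * E * (ai - bi) = E * ((sn + (s1 + lam) * c2) * ai) - (E + lam * c2) * (E * bi).
        by rewrite /E; ring.
      rewrite aei a0i /A /c2; ring.
    - rewrite /psi cosD.
      have h1' := cos2Dsin2 phic; have h2' := cos2Dsin2 phiz.
      have -> : (E * k * cos phic + lam * A * cos phiz) ^+ 2 + (E * k * sin phic - lam * A * sin phiz) ^+ 2
        = (E * k) ^+ 2 * (cos phic ^+ 2 + sin phic ^+ 2) + (lam * A) ^+ 2 * (cos phiz ^+ 2 + sin phiz ^+ 2)
          + 2 * (E * k) * (lam * A) * (cos phic * cos phiz - sin phic * sin phiz) by ring.
      by rewrite h1' h2' !mulr1.
  have := lb_le_inf neS lbK; rewrite hinf => H.
  have : s1 * K0 <= 0 by move: H; rewrite -lerBrDl subrr.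
  by rewrite leNgt mulr_gt0.
move=> hpsi.
have hsin : sin (phic + phiz) = 0 by apply: cos1sin0; rewrite hpsi normrN normr1.
move: hpsi hsin; rewrite cosD sinD => hc hs.
have h1' := cos2Dsin2 phic; have h2' := cos2Dsin2 phiz.
have hsq : (cos phic + cos phiz) ^+ 2 + (sin phic - sin phiz) ^+ 2 = 0.
  have -> : (cos phic + cos phiz) ^+ 2 + (sin phic - sin phiz) ^+ 2
    = (cos phic ^+ 2 + sin phic ^+ 2) + (cos phiz ^+ 2 + sin phiz ^+ 2) + 2 * (cos phic * cos phiz - sin phic * sin phiz) by ring.
  by rewrite h1' h2' hc; ring.
have := paddr_eq0 (sqr_ge0 (cos phic + cos phiz)) (sqr_ge0 (sin phic - sin phiz)).
rewrite hsq eqxx => /esym/andP [/eqP Hq1 /eqP Hq2].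
have ecc : cos phic = - cos phiz.
  by move: Hq1 => /eqP; rewrite sqrf_eq0 addr_eq0 => /eqP.
have ess : sin phic = sin phiz.
  by move: Hq2 => /eqP; rewrite sqrf_eq0 subr_eq0 => /eqP.
set lam := k * E / A.
have hl : 0 <= lam by rewrite /lam ltW // divr_gt0 // mulr_gt0.
have lamA : lam * A = k * E by rewrite /lam divfK // gt_eqF.
have [hw [b hM]] := RZF_prop' lam hl.
have ae := alpha_eq' lam _ b hw hM.
rewrite hcc -rcD -rcM -rcD in ae.
have aer := congr1 (@complex.Re R) ae; have aei := congr1 (@complex.Im R) ae.
rewrite Re_rcM cReB Re_rcM Re_rcM cRe_conj rho_re c1_re in aer.
rewrite Im_rcM cImB Im_rcM Im_rcM cIm_conj rho_im c1_im in aei.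
set ar := complex.Re (dotH h1 (w_RZF h0 h1 s0 s1 sn c1 lam)) in aer; set ai := complex.Im (dotH h1 (w_RZF h0 h1 s0 s1 sn c1 lam)) in aei.
set P := sn + (s1 + lam) * c2 in aer aei.
have PA0 : P * A != 0 by rewrite mulf_neq0 // gt_eqF // /P addr_gt0 // mulr_gt0 // ltr_wpDr // ltW.
have hc' : c1 + rc lam * dotH h1 (w_RZF h0 h1 s0 s1 sn c1 lam) = 0.
  apply/eqP; rewrite eq_complex; apply/andP; split; apply/eqP.
    rewrite cReD Re_rcM c1_re -/ar /=.
    apply: (mulfI PA0); rewrite mulr0.
    have -> : P * A * (k * cos phic + lam * ar) = P * A * k * cos phic + lam * A * k * (P * ar) / k.
      by field; rewrite gt_eqF.
    rewrite aer ecc /P /lam /E /A /c2; field; rewrite ?mulf_neq0 ?gt_eqF //.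
  rewrite cImD Im_rcM c1_im -/ai /=.
  apply: (mulfI PA0); rewrite mulr0.
  have -> : P * A * (k * sin phic + lam * ai) = P * A * k * sin phic + lam * A * k * (P * ai) / k.
    by field; rewrite gt_eqF.
  rewrite aei ess /P /lam /E /A /c2; field; rewrite ?mulf_neq0 ?gt_eqF //.
have eqJ := eq_case' lam _ wD b b0 hw hv hM hM0 hc'.
apply/eqP; rewrite eq_le infge andbT.
have hlS : has_lbound S by exists (J wD).
have mem : S (J (w_RZF h0 h1 s0 s1 sn c1 lam)).
  exists lam.
  exact: hl.
  reflexivity.
have H := ge_inf hlS mem.
apply: (le_trans H); rewrite le_eqVlt; apply/orP; left; apply/eqP; exact: eqJ.
Qed.
End Fin.

Theorem mainTheorem12 (R : realType) (N : nat) (h0 h1 : 'cV[R[i]]_N)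
  (tau phiz phic : R) (sig0 sig1 sign : R) (c1 : R[i]) (c1abs : R) :
  (2 <= N)%N ->
  dotH h0 h0 = 1 -> dotH h1 h1 = 1 ->
  0 < tau < pi / 2 ->
  0 <= phiz < 2 * pi ->
  dotH h0 h1 = rc (sin tau) * expi phiz ->
  0 < sig0 -> 0 < sig1 -> 0 < sign ->
  0 <= c1abs -> 0 <= phic < 2 * pi ->
  c1 = rc c1abs * expi phic ->
  c1abs ^+ 2 <= sig0 * sig1 ->
  c1 != 0 ->
  sign * tan tau - c1abs * cos tau * cos (phic + phiz) != 0 ->
  (MSE_RZF h0 h1 sig0 sig1 sign c1 = MSE_MMSE_DR h0 h1 sig0 sig1 sign c1
   <-> cos (phic + phiz) = -1).
Proof.
move=> _ h00 h11 htau _ hrho s0p s1p snp kge _ hc1 kb c1n _.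
have rho_re : complex.Re (dotH h0 h1) = sin tau * cos phiz by rewrite hrho Re_rcM.
have rho_im : complex.Im (dotH h0 h1) = sin tau * sin phiz by rewrite hrho Im_rcM.
have c1_re : complex.Re c1 = c1abs * cos phic by rewrite hc1 Re_rcM.
have c1_im : complex.Im c1 = c1abs * sin phic by rewrite hc1 Im_rcM.
have sp : 0 < sin tau by apply: sin_gt0_pihalf.
have cp : 0 < cos tau.
  apply: cos_gt0_pihalf; move: htau => /andP [t0 t1]; apply/andP; split => //.
  apply: lt_trans t0; rewrite oppr_lt0 divr_gt0 ?pi_gt0 //.
have kp : 0 < c1abs.
  rewrite lt_neqAle kge andbT; apply/eqP => k0; move: c1n; rewrite hc1 -k0.
  by rewrite (_ : rc 0 = 0) // mul0r eqxx.
have cb : complex.Re c1 ^+ 2 + complex.Im c1 ^+ 2 <= sig0 * sig1.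
  rewrite c1_re c1_im.
  have -> : (c1abs * cos phic) ^+ 2 + (c1abs * sin phic) ^+ 2 = c1abs ^+ 2 * (cos phic ^+ 2 + sin phic ^+ 2) by ring.
  by rewrite cos2Dsin2 mulr1.
exact: (@main_sec R N h0 h1 sig0 sig1 sign c1 h00 h11 s0p s1p snp cb tau phiz phic c1abs
          rho_re rho_im c1_re c1_im sp cp kp).
Qed.
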